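(* Under the standing assumptions below: (i) if $e\in S$, $f\in S_2$ and $ef=f$, then $e\in S_2$; (ii) $S_1\cdot S_1\subseteq S_1\cup S_0$.
   Context: Standing assumptions: $S$ is a semilattice (commutative semigroup of idempotents), $0\le\delta<0.03$, and $\theta:S\to M_2(\mathbb C)$ satisfies $\|\theta(e)\theta(f)-\theta(ef)\|_{HS}\le\delta$ for all $e,f\in S$, where $\|A\|_{HS}=(\operatorname{tr}(A^*A))^{1/2}$. For $k\in\{0,1,2\}$, $S_k=\{x\in S:\ |\operatorname{tr}\theta(x)-k|<0.95\}$; these sets are pairwise disjoint and cover $S$. *)

(* Defs.v *)
From HB Require Import structures.
From mathcomp Require Import all_boot all_order all_algebra.
Set Implicit Arguments. Unset Strict Implicit. Unset Printing Implicit Defensive.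
Import Order.TTheory GRing.Theory Num.Theory.
Local Open Scope ring_scope.

Definition hs_norm (C : numClosedFieldType) (n : nat) (A : 'M[C]_n) : C :=
  sqrtC (\tr ((map_mx Num.conj A)^T *m A)).

Definition is_semilattice (S : Type) (mul : S -> S -> S) : Prop :=
  (forall x y z, mul x (mul y z) = mul (mul x y) z) /\
  (forall x y, mul x y = mul y x) /\
  (forall x, mul x x = x).

Definition in_Sk (C : numClosedFieldType) (S : Type) (theta : S -> 'M[C]_2)
  (k : nat) (x : S) : Prop :=
  `|\tr (theta x) - k%:R| < 95%:R / 100%:R.

(* Main.v *)
Require Import Defs.
From HB Require Import structures.
From mathcomp Require Import all_boot all_order all_algebra.
From mathcomp Require Import ring lra.
Require Import Defs.
Set Implicit Arguments. Unset Strict Implicit. Unset Printing Implicit Defensive.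
Import Order.TTheory GRing.Theory Num.Theory.
Local Open Scope ring_scope.
Set Warnings "-redundant-canonical-projection -projection-no-head-constant".

Section RS.
Variable C : numClosedFieldType.
Definition RS := {x : C | x \is Num.real}.
HB.instance Definition _ := [isSub for (@sval C _ : RS -> C)].
HB.instance Definition _ := [Choice of RS by <:].
HB.instance Definition _ := [SubChoice_isSubIntegralDomain of RS by <:].
HB.instance Definition _ := [SubIntegralDomain_isSubField of RS by <:].

Definition RSle (x y : RS) := (val x <= val y).
Definition RSlt (x y : RS) := (val x < val y).
Definition RSnorm (x : RS) : RS := Sub `|val x| (normr_real _).

Lemma RSval0 : val (0 : RS) = 0. Proof. by []. Qed.

Fact RS_le0_add x y : RSle 0 x -> RSle 0 y -> RSle 0 (x + y).
Proof. rewrite /RSle /= => *; exact: addr_ge0. Qed.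
Fact RS_le0_mul x y : RSle 0 x -> RSle 0 y -> RSle 0 (x * y).
Proof. rewrite /RSle /= => *; exact: mulr_ge0. Qed.
Fact RS_le0_anti x : RSle 0 x -> RSle x 0 -> x = 0.
Proof. rewrite /RSle /= => h1 h2; apply: val_inj; apply/eqP; rewrite eq_le h1 h2 //. Qed.
Fact RS_sub_ge0 x y : RSle 0 (y - x) = RSle x y.
Proof. by rewrite /RSle /= subr_ge0. Qed.
Fact RS_le0_total x : RSle 0 x || RSle x 0.
Proof. rewrite /RSle /=; exact: (valP x). Qed.
Fact RS_normN x : RSnorm (- x) = RSnorm x.
Proof. apply: val_inj => /=; exact: normrN. Qed.
Fact RS_ge0_norm x : RSle 0 x -> RSnorm x = x.
Proof. rewrite /RSle => h; apply: val_inj => /=; exact: ger0_norm. Qed.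
Fact RS_lt_def x y : RSlt x y = (y != x) && RSle x y.
Proof. by rewrite /RSlt /RSle lt_def. Qed.

HB.instance Definition _ := Num.IntegralDomain_isLeReal.Build RS
  RS_le0_add RS_le0_mul RS_le0_anti RS_sub_ge0 RS_le0_total RS_normN RS_ge0_norm RS_lt_def.

Lemma RSleE (x y : RS) : (x <= y) = (val x <= val y). Proof. by []. Qed.
Lemma RSltE (x y : RS) : (x < y) = (val x < val y). Proof. by []. Qed.
Definition nr (z : C) : RS := Sub `|z| (normr_real z).
Lemma nrE z : val (nr z) = `|z|. Proof. by []. Qed.
Lemma nr_ge0 z : 0 <= nr z. Proof. by rewrite RSleE nrE normr_ge0. Qed.
Lemma nrM x y : nr (x * y) = nr x * nr y.
Proof. by apply: val_inj; rewrite rmorphM /= normrM. Qed.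
Lemma nrD x y : nr (x + y) <= nr x + nr y.
Proof. by rewrite RSleE rmorphD /= ler_normD. Qed.
Lemma nrN x : nr (- x) = nr x. Proof. by apply: val_inj; rewrite /= normrN. Qed.
Lemma nrB x y : nr (x - y) <= nr x + nr y.
Proof. by rewrite -(nrN y) nrD. Qed.
Lemma nr_nat n : nr n%:R = n%:R.
Proof. by apply: val_inj; rewrite rmorph_nat /= normr_nat. Qed.
Lemma nr_par a b : nr (a + b) ^+ 2 + nr (a - b) ^+ 2 = 2%:R * nr a ^+ 2 + 2%:R * nr b ^+ 2.
Proof.
apply: val_inj; rewrite !rmorphD !rmorphM rmorph_nat /= -!expr2 !normCK.
rewrite rmorphB rmorphD /=; ring.
Qed.
Lemma val_divn a b : val (a%:R / b%:R : RS) = a%:R / b%:R.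
Proof. by rewrite fmorph_div !rmorph_nat. Qed.
Definition i0 : 'I_2 := ord0.
Definition i1 : 'I_2 := ord_max.
Lemma mul2 (A B : 'M[C]_2) i j : (A *m B) i j = A i i0 * B i0 j + A i i1 * B i1 j.
Proof.
rewrite mxE big_ord_recr big_ord1 /=.
by have -> : widen_ord (leqnSn 1) ord0 = i0 by apply: val_inj.
Qed.
Lemma tr2 (A : 'M[C]_2) : \tr A = A i0 i0 + A i1 i1.
Proof.
rewrite /mxtrace big_ord_recr big_ord1 /=.
by have -> : widen_ord (leqnSn 1) ord0 = i0 by apply: val_inj.
Qed.
Lemma hs2 (A : 'M[C]_2) (δ : RS) : 0 <= δ -> hs_norm A <= val δ ->
  nr (A i0 i0) ^+ 2 + nr (A i0 i1) ^+ 2 + nr (A i1 i0) ^+ 2 + nr (A i1 i1) ^+ 2 <= δ ^+ 2.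
Proof.
move=> d0; rewrite /hs_norm tr2 !mul2 !mxE.
match goal with |- is_true (sqrtC ?y <= _) -> _ => set x := y end.
have Ex : val (nr (A i0 i0) ^+ 2 + nr (A i0 i1) ^+ 2 + nr (A i1 i0) ^+ 2 + nr (A i1 i1) ^+ 2) = x.
  rewrite !rmorphD !rmorphXn /= !normCK /x.
  rewrite ![_ * _^*]mulrC; ring.
move=> h; rewrite RSleE Ex rmorphXn /=.
have x0 : 0 <= x.
  have h0 : (0:RS) <= nr (A i0 i0) ^+ 2 + nr (A i0 i1) ^+ 2 + nr (A i1 i0) ^+ 2 + nr (A i1 i1) ^+ 2.
    by rewrite !addr_ge0 // exprn_ge0 // nr_ge0.
  by move: h0; rewrite RSleE Ex.
rewrite -(sqrtCK x) ler_pXn2r // nnegrE ?sqrtC_ge0 //.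
Qed.
Lemma eigR1 (x y d : RS) : 0 <= x -> 0 <= y -> 1 <= x + y -> x * y <= d ->
  d < 3%:R / 100%:R -> x <= 1/2%:R -> 94%:R * x <= 100%:R * (x * y).
Proof.
move=> x0 y0 s p d3 xh.
have h1 : 0 <= x * (y - 1/2%:R) by apply: mulr_ge0 => //; lra.
have h2 : x <= 6%:R/100%:R by nra.
have h3 : 0 <= x * (y - 94%:R/100%:R) by apply: mulr_ge0 => //; lra.
nra.
Qed.
Lemma eigR2 (x y d : RS) : 0 <= x -> 0 <= y -> 1 <= x + y -> x * y <= d ->
  d < 3%:R / 100%:R -> 1/2%:R < x -> 94%:R * y <= 100%:R * (x * y).
Proof.
move=> x0 y0 s p d3 xh.
have h1 : 0 <= y * (x - 1/2%:R) by apply: mulr_ge0 => //; lra.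
have h2 : y <= 6%:R/100%:R by nra.
have h3 : 0 <= y * (x - 94%:R/100%:R) by apply: mulr_ge0 => //; lra.
nra.
Qed.
Lemma combR (A B D1 D2 d : RS) : 0 <= A -> 0 <= B -> 0 <= D1 -> 0 <= D2 -> 0 <= d ->
  94%:R * D1 <= 100%:R * A -> 94%:R * D2 <= 100%:R * B -> A ^+ 2 + B ^+ 2 <= d ^+ 2 ->
  d < 3%:R / 100%:R -> 20%:R * (D1 + D2) < 1.
Proof.
move=> *.
have hs := sqr_ge0 (A - B).
have h : (A + B) ^+ 2 <= 2%:R * d ^+ 2 by nra.
have h' : d ^+ 2 <= 9%:R / 10000%:R.
  have : d * d <= 3%:R / 100%:R * (3%:R / 100%:R) by apply: ler_pM => //; lra.
  rewrite expr2; lra.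
have hAB : A + B < 47%:R / 1000%:R.
  rewrite ltNge; apply/negP => hh.
  have : 47%:R / 1000%:R * (47%:R / 1000%:R) <= (A + B) * (A + B) by apply: ler_pM => //; lra.
  rewrite -expr2; lra.
lra.
Qed.
Lemma sqR (A B P Q R n00 n01 n10 n11 d : RS) : 0 <= n01 -> 0 <= n10 ->
  P ^+ 2 + Q ^+ 2 = 2%:R * A ^+ 2 + 2%:R * B ^+ 2 ->
  P ^+ 2 + R ^+ 2 = 2%:R * n00 ^+ 2 + 2%:R * n11 ^+ 2 ->
  Q ^+ 2 <= R ^+ 2 + 4%:R * (n01 * n10) ->
  n00 ^+ 2 + n01 ^+ 2 + n10 ^+ 2 + n11 ^+ 2 <= d ^+ 2 ->
  A ^+ 2 + B ^+ 2 <= d ^+ 2.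
Proof. move=> *; have := sqr_ge0 (n01 - n10); nra. Qed.
Lemma nr1 : nr 1 = 1. Proof. by apply: val_inj; rewrite /= normr1. Qed.
Lemma eig (l : C) (d : RS) : 0 <= d -> d < 3%:R / 100%:R -> nr (l ^+ 2 - l) <= d ->
  exists k : bool, 94%:R * nr (l - k%:R) <= 100%:R * nr (l ^+ 2 - l).
Proof.
move=> d0 d3.
have -> : l ^+ 2 - l = l * (l - 1) by ring.
rewrite nrM => p.
have s : 1 <= nr l + nr (l - 1).
  by have := nrB l (l - 1); rewrite (_ : l - (l - 1) = 1) ?nr1 //; ring.
case: (lerP (nr l) (1/2%:R)) => h.
  by exists false; rewrite /= subr0; apply: (eigR1 _ _ s p) => //; apply: nr_ge0.
by exists true; rewrite /=; apply: (eigR2 _ _ s p) => //; apply: nr_ge0.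
Qed.
Lemma entry_sq (X : 'M[C]_2) i j :
  (X *m X - X) i j = X i i0 * X i0 j + X i i1 * X i1 j - X i j.
Proof. by rewrite [LHS]mxE mul2 [X in _ + X = _]mxE. Qed.

Lemma core (X : 'M[C]_2) (d : RS) : 0 <= d -> d < 3%:R / 100%:R ->
  hs_norm (X *m X - X) <= val d ->
  exists l1 l2 : C, exists k1 k2 : bool,
    [/\ l1 + l2 = \tr X, l1 * l2 = X i0 i0 * X i1 i1 - X i0 i1 * X i1 i0 &
        20%:R * (nr (l1 - k1%:R) + nr (l2 - k2%:R)) < 1].
Proof.
move=> d0 d3 h.
have hm := hs2 d0 h; rewrite !entry_sq in hm.
set a := X i0 i0 in hm *; set b := X i0 i1 in hm *; set c := X i1 i0 in hm *; set e := X i1 i1 in hm *.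
set m00 := a * a + b * c - a in hm; set m01 := a * b + b * e - b in hm.
set m10 := c * a + e * c - c in hm; set m11 := c * b + e * e - e in hm.
set t := a + e; set dd := a * e - b * c.
set r := sqrtC (t ^+ 2 - 4%:R * dd).
have rr : r ^+ 2 = t ^+ 2 - 4%:R * dd by rewrite sqrtCK.
have n2 : (2%:R : C) != 0 by rewrite pnatr_eq0.
set l1 := (t + r) / 2%:R; set l2 := (t - r) / 2%:R.
have Es : l1 + l2 = t by rewrite /l1 /l2; field.
have Ep : l1 * l2 = dd.
  have -> : l1 * l2 = (t ^+ 2 - r ^+ 2) / 4%:R by rewrite /l1 /l2; field.
  by rewrite rr; field.
set mu1 := l1 ^+ 2 - l1; set mu2 := l2 ^+ 2 - l2.
have E1 : mu1 + mu2 = m00 + m11.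
  have -> : mu1 + mu2 = (t ^+ 2 + r ^+ 2) / 2%:R - t by rewrite /mu1 /mu2 /l1 /l2; field.
  by rewrite rr /m00 /m11 /t /dd; field.
have E2 : (mu1 - mu2) ^+ 2 = (m00 - m11) ^+ 2 + 4%:R * (m01 * m10).
  have -> : mu1 - mu2 = r * (t - 1) by rewrite /mu1 /mu2 /l1 /l2; field.
  by rewrite exprMn rr /m00 /m11 /m01 /m10 /t /dd; ring.
have hsq : nr mu1 ^+ 2 + nr mu2 ^+ 2 <= d ^+ 2.
  apply: (sqR (P := nr (mu1 + mu2)) (Q := nr (mu1 - mu2)) (R := nr (m00 - m11))
     (n00 := nr m00) (n01 := nr m01) (n10 := nr m10) (n11 := nr m11)) => //.
  - exact: nr_ge0.
  - exact: nr_ge0.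
  - exact: nr_par.
  - by rewrite E1; apply: nr_par.
  - rewrite !expr2 -nrM -[nr (m00 - m11) * _]nrM -!expr2 E2.
    have := nrD ((m00 - m11) ^+ 2) (4%:R * (m01 * m10)).
    by rewrite [nr (4%:R * _)]nrM nr_nat nrM.
have A0 := nr_ge0 mu1; have B0 := nr_ge0 mu2.
have hA : nr mu1 <= d by have := sqr_ge0 (nr mu2); nra.
have hB : nr mu2 <= d by have := sqr_ge0 (nr mu1); nra.
have [k1 hk1] := eig d0 d3 hA.
have [k2 hk2] := eig d0 d3 hB.
exists l1, l2, k1, k2; split => //; first by rewrite tr2.
exact: (combR A0 B0 (nr_ge0 _) (nr_ge0 _) d0 hk1 hk2 hsq d3).
Qed.
Lemma entry_mul (A B D : 'M[C]_2) i j :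
  (A *m B - D) i j = A i i0 * B i0 j + A i i1 * B i1 j - D i j.
Proof. by rewrite [LHS]mxE mul2 [X in _ + X = _]mxE. Qed.

Lemma near (t l1 l2 : C) (k1 k2 : bool) (j : nat) : l1 + l2 = t ->
  nr ((k1 + k2)%:R - j%:R) <= nr (t - j%:R) + (nr (l1 - k1%:R) + nr (l2 - k2%:R)).
Proof.
move=> Es.
have -> : (k1 + k2)%:R - j%:R = (t - j%:R) - ((l1 - k1%:R) + (l2 - k2%:R)).
  by rewrite natrD -Es; ring.
apply: (le_trans (nrB _ _)); apply: lerD => //; exact: nrD.
Qed.
Lemma natBl a b : (a <= b)%N -> nr (a%:R - b%:R) = (b - a)%:R.
Proof. by move=> h; rewrite -nrN opprB -natrB // nr_nat. Qed.
Lemma natBr a b : (b <= a)%N -> nr (a%:R - b%:R) = (a - b)%:R.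
Proof. by move=> h; rewrite -natrB // nr_nat. Qed.

Lemma ident (p q r s a b c e : C) :
  let n00 := p * a + q * c - a in let n01 := p * b + q * e - b in
  let n10 := r * a + s * c - c in let n11 := r * b + s * e - e in
  let m00 := a * a + b * c - a in let m01 := a * b + b * e - b in
  let m10 := c * a + e * c - c in let m11 := c * b + e * e - e in
  let t := a + e in let d := a * e - b * c in
  d * (t - 1) * (p + s - 2%:R) =
  ((t - 1) * t - d) * (n00 + n11) - (n00 * m00 + n01 * m10 + n10 * m01 + n11 * m11).
Proof. rewrite /=; ring. Qed.
Lemma hlo (L U1 U2 : RS) : 0 <= U1 -> 0 <= U2 -> 20%:R * (U1 + U2) < 1 -> 1 <= L + U1 -> 19%:R/20%:R <= L.
Proof. move=> *; lra. Qed.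
Lemma hlo2 (L U1 U2 : RS) : 20%:R * (U1 + U2) < 1 -> 1 <= L + (U1 + U2) -> 19%:R/20%:R <= L.
Proof. move=> *; lra. Qed.
Lemma hhi (L U1 U2 : RS) : 0 <= U1 -> 0 <= U2 -> 20%:R * (U1 + U2) < 1 -> L <= 1 + U1 -> L <= 21%:R/20%:R.
Proof. move=> *; lra. Qed.
Lemma hhi2 (L U1 U2 : RS) (c : nat) : 20%:R * (U1 + U2) < 1 -> L <= c%:R + (U1 + U2) -> L <= c%:R + 1/20%:R.
Proof. move=> *; lra. Qed.
Lemma finalR (L1 L2 T1 T X N00 N01 N10 N11 M00 M01 M10 M11 d : RS) :
  0 <= L1 -> 0 <= L2 -> 0 <= T1 -> 0 <= T -> 0 <= X ->
  0 <= N00 -> 0 <= N01 -> 0 <= N10 -> 0 <= N11 ->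
  0 <= M00 -> 0 <= M01 -> 0 <= M10 -> 0 <= M11 -> 0 <= d ->
  19%:R/20%:R <= L1 -> L1 <= 21%:R/20%:R -> 19%:R/20%:R <= L2 -> L2 <= 21%:R/20%:R ->
  19%:R/20%:R <= T1 -> T1 <= 1 + 1/20%:R -> T <= 2%:R + 1/20%:R ->
  N00 <= d -> N01 <= d -> N10 <= d -> N11 <= d ->
  M00 <= d -> M01 <= d -> M10 <= d -> M11 <= d -> d < 3%:R / 100%:R ->
  L1 * L2 * T1 * X <= (T1 * T + L1 * L2) * (N00 + N11) + (N00 * M00 + N01 * M10 + N10 * M01 + N11 * M11) ->
  X < 95%:R / 100%:R.
Proof.
move=> L10 L20 T10 T0 X0 N000 N010 N100 N110 M000 M010 M100 M110 d0
  hL1 hL1' hL2 hL2' hT1 hT1' hT' n00 n01 n10 n11 m00 m01 m10 m11 d3 key.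
have c0 : 0 <= 19%:R/20%:R :> RS by lra.
have hA : L1 * L2 <= 21%:R/20%:R * (21%:R/20%:R) by exact: (ler_pM L10 L20 hL1' hL2').
have hB : T1 * T <= (1 + 1/20%:R) * (2%:R + 1/20%:R) by exact: (ler_pM T10 T0 hT1' hT').
have hC : 19%:R/20%:R * (19%:R/20%:R) <= L1 * L2 by exact: (ler_pM c0 c0 hL1 hL2).
have c1 : 0 <= 19%:R/20%:R * (19%:R/20%:R) :> RS by lra.
have hD : 19%:R/20%:R * (19%:R/20%:R) * (19%:R/20%:R) <= L1 * L2 * T1 by exact: (ler_pM c1 c0 hC hT1).
have hS : T1 * T + L1 * L2 <= 4%:R.
  move: hA hB; clear; move=> hA hB; lra.
have hN : N00 + N11 <= 2%:R * d.
  move: n00 n11; clear; move=> *; lra.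
have hE : (T1 * T + L1 * L2) * (N00 + N11) <= 4%:R * (2%:R * d).
  exact: (ler_pM (addr_ge0 (mulr_ge0 T10 T0) (mulr_ge0 L10 L20)) (addr_ge0 N000 N110) hS hN).
have h1 : N00 * M00 <= d * d by exact: (ler_pM N000 M000 n00 m00).
have h2 : N01 * M10 <= d * d by exact: (ler_pM N010 M100 n01 m10).
have h3 : N10 * M01 <= d * d by exact: (ler_pM N100 M010 n10 m01).
have h4 : N11 * M11 <= d * d by exact: (ler_pM N110 M110 n11 m11).
have h5 : d * d <= 3%:R / 100%:R * (3%:R / 100%:R) by exact: (ler_pM d0 d0 (ltW d3) (ltW d3)).
have hR : L1 * L2 * T1 * X <= 1 / 4%:R.
  move: key hE h1 h2 h3 h4 h5 d3; clear; move=> *; lra.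
rewrite ltNge; apply/negP => hX.
have c2 : 0 <= 19%:R/20%:R * (19%:R/20%:R) * (19%:R/20%:R) :> RS by lra.
have c3 : 0 <= 95%:R/100%:R :> RS by lra.
have := ler_pM c2 c3 hD hX.
move: hR; clear; move=> hR hh; lra.
Qed.
Lemma sq4le (w x y z d : RS) : 0 <= w -> 0 <= x -> 0 <= y -> 0 <= z -> 0 <= d ->
  w ^+ 2 + x ^+ 2 + y ^+ 2 + z ^+ 2 <= d ^+ 2 -> [/\ w <= d, x <= d, y <= d & z <= d].
Proof.
move=> w0 x0 y0 z0 d0 h.
have q1 := sqr_ge0 w; have q2 := sqr_ge0 x; have q3 := sqr_ge0 y; have q4 := sqr_ge0 z.
have hw : w ^+ 2 <= d ^+ 2 by lra.
have hx : x ^+ 2 <= d ^+ 2 by lra.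
have hy : y ^+ 2 <= d ^+ 2 by lra.
have hz : z ^+ 2 <= d ^+ 2 by lra.
by split; rewrite -(ler_pXn2r (n := 2)) // nnegrE.
Qed.

Lemma part1 (E F : 'M[C]_2) (d : RS) : 0 <= d -> d < 3%:R / 100%:R ->
  hs_norm (F *m F - F) <= val d -> hs_norm (E *m F - F) <= val d ->
  nr (\tr F - 2%:R) < 95%:R / 100%:R -> nr (\tr E - 2%:R) < 95%:R / 100%:R.
Proof.
move=> d0 d3 hF hEF hS.
have hM := hs2 d0 hF; rewrite !entry_sq in hM.
have hN := hs2 d0 hEF; rewrite !entry_mul in hN.
have [l1 [l2 [k1 [k2 [Es Ep hD]]]]] := core d0 d3 hF.
have hn := near k1 k2 2 Es.
have [Ek1 Ek2] : k1 = true /\ k2 = true.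
  move: (nr_ge0 (\tr F - 2%:R)) hS; case: k1 k2 hD hn => [] [] hD hn hS0 hS //.
  - rewrite /= ?addn0 ?add0n in hn hD; rewrite natBl // ?subn0 ?subn1 /= in hn.
    by exfalso; move: hn hD hS hS0; clear; move=> *; lra.
  - rewrite /= ?addn0 ?add0n in hn hD; rewrite natBl // ?subn0 ?subn1 /= in hn.
    by exfalso; move: hn hD hS hS0; clear; move=> *; lra.
  - rewrite /= ?addn0 ?add0n in hn hD; rewrite natBl // ?subn0 ?subn1 /= in hn.
    by exfalso; move: hn hD hS hS0; clear; move=> *; lra.
subst k1 k2; rewrite /= mulr1n in hD.
rewrite tr2 in Es hS *.
set a := F i0 i0 in hM hN Ep Es hS *; set b := F i0 i1 in hM hN Ep *.
set c := F i1 i0 in hM hN Ep *; set e := F i1 i1 in hM hN Ep Es hS *.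
set p := E i0 i0 in hN *; set q := E i0 i1 in hN *.
set r := E i1 i0 in hN *; set s := E i1 i1 in hN *.
have key := ident p q r s a b c e; rewrite /= -Ep -Es in key.
have [n00 n01 n10 n11] := sq4le (nr_ge0 _) (nr_ge0 _) (nr_ge0 _) (nr_ge0 _) d0 hN.
have [m00 m01 m10 m11] := sq4le (nr_ge0 _) (nr_ge0 _) (nr_ge0 _) (nr_ge0 _) d0 hM.
set u1 := l1 - 1 in hD; set u2 := l2 - 1 in hD.
have U1 := nr_ge0 u1; have U2 := nr_ge0 u2.
have El1 : l1 = 1 + u1 by rewrite /u1; ring.
have El2 : l2 = 1 + u2 by rewrite /u2; ring.
have hL1 : 19%:R/20%:R <= nr l1.
  apply: (hlo U1 U2 hD); rewrite -nr1 (_ : 1 = l1 - u1); [exact: nrB | rewrite El1; ring].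
have hL2 : 19%:R/20%:R <= nr l2.
  apply: (hlo U2 U1); first by rewrite addrC.
  rewrite -nr1 (_ : 1 = l2 - u2); [exact: nrB | rewrite El2; ring].
have hL1' : nr l1 <= 21%:R/20%:R.
  apply: (hhi U1 U2 hD); rewrite El1; have := nrD 1 u1; rewrite nr1; exact.
have hL2' : nr l2 <= 21%:R/20%:R.
  apply: (hhi U2 U1); first by rewrite addrC.
  rewrite El2; have := nrD 1 u2; rewrite nr1; exact.
have ET1 : l1 + l2 - 1 = 1 + (u1 + u2) by rewrite El1 El2; ring.
have hT1 : 19%:R/20%:R <= nr (l1 + l2 - 1).
  apply: (hlo2 hD).
  have h := nrB (l1 + l2 - 1) (u1 + u2).
  rewrite (_ : l1 + l2 - 1 - (u1 + u2) = 1) ?nr1 in h; last by rewrite ET1; ring.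
  by apply: (le_trans h); apply: lerD => //; exact: nrD.
have hT1' : nr (l1 + l2 - 1) <= 1 + 1/20%:R.
  apply: (hhi2 (c := 1) hD); rewrite ET1.
  by apply: (le_trans (nrD _ _)); rewrite nr1; apply: lerD => //; exact: nrD.
have hT' : nr (l1 + l2) <= 2%:R + 1/20%:R.
  apply: (hhi2 hD); rewrite (_ : l1 + l2 = 2%:R + (u1 + u2)); last by rewrite El1 El2; ring.
  apply: (le_trans (nrD _ _)); rewrite nr_nat; apply: lerD => //; exact: nrD.
apply: (finalR (nr_ge0 l1) (nr_ge0 l2) (nr_ge0 (l1 + l2 - 1)) (nr_ge0 (l1 + l2))
  (nr_ge0 _) (nr_ge0 _) (nr_ge0 _) (nr_ge0 _) (nr_ge0 _) (nr_ge0 _) (nr_ge0 _) (nr_ge0 _) (nr_ge0 _) d0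
  hL1 hL1' hL2 hL2' hT1 hT1' hT' n00 n01 n10 n11 m00 m01 m10 m11 d3).
rewrite tr2 -/p -/s; have := congr1 nr key; rewrite !nrM => ->.
apply: (le_trans (nrB _ _)); apply: lerD.
  rewrite nrM; apply: ler_pM; [exact: nr_ge0 | exact: nr_ge0 | | exact: nrD].
  by apply: (le_trans (nrB _ _)); rewrite !nrM.
apply: (le_trans (nrD _ _)); rewrite nrM; apply: lerD; last by [].
apply: (le_trans (nrD _ _)); rewrite nrM; apply: lerD; last by [].
by apply: (le_trans (nrD _ _)); rewrite !nrM.
Qed.
Lemma near2 (t l1 l2 : C) (k1 k2 : bool) : l1 + l2 = t ->
  nr (t - (k1 + k2)%:R) <= nr (l1 - k1%:R) + nr (l2 - k2%:R).
Proof.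
move=> Es; rewrite (_ : t - (k1 + k2)%:R = (l1 - k1%:R) + (l2 - k2%:R)); first exact: nrD.
by rewrite natrD -Es; ring.
Qed.

Lemma S012 (X : 'M[C]_2) (d : RS) : 0 <= d -> d < 3%:R / 100%:R ->
  hs_norm (X *m X - X) <= val d ->
  [\/ nr (\tr X - 0%:R) < 95%:R / 100%:R, nr (\tr X - 1%:R) < 95%:R / 100%:R |
      nr (\tr X - 2%:R) < 95%:R / 100%:R].
Proof.
move=> d0 d3 h.
have [l1 [l2 [k1 [k2 [Es Ep hD]]]]] := core d0 d3 h.
have hn := near2 k1 k2 Es.
have lt : forall x : RS, x <= nr (l1 - k1%:R) + nr (l2 - k2%:R) -> x < 95%:R / 100%:R.
  by move=> x hx; move: hx hD; clear; move=> *; lra.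
case: k1 k2 hD hn lt => [] [] hD hn lt; rewrite /= ?addn0 ?add0n ?addn1 in hn.
- by constructor 3; apply: lt.
- by constructor 2; apply: lt.
- by constructor 2; apply: lt.
- by constructor 1; apply: lt.
Qed.

Lemma notS12 (X : 'M[C]_2) (d : RS) : 0 <= d -> d < 3%:R / 100%:R ->
  hs_norm (X *m X - X) <= val d ->
  nr (\tr X - 1%:R) < 95%:R / 100%:R -> nr (\tr X - 2%:R) < 95%:R / 100%:R -> False.
Proof.
move=> d0 d3 h h1 h2.
have [l1 [l2 [k1 [k2 [Es Ep hD]]]]] := core d0 d3 h.
have hn1 := near k1 k2 1 Es; have hn2 := near k1 k2 2 Es.
have t0 := nr_ge0 (\tr X - 1%:R); have t0' := nr_ge0 (\tr X - 2%:R).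
case: k1 k2 hD hn1 hn2 => [] [] hD hn1 hn2; rewrite /= ?addn0 ?add0n ?addn1 in hn1 hn2.
- rewrite natBr // ?subn1 /= in hn1; move: hn1 hD h1 t0; clear; move=> *; lra.
- rewrite natBl // ?subn1 /= in hn2; move: hn2 hD h2 t0'; clear; move=> *; lra.
- rewrite natBl // ?subn1 /= in hn2; move: hn2 hD h2 t0'; clear; move=> *; lra.
- rewrite natBl // ?subn0 /= in hn2; move: hn2 hD h2 t0'; clear; move=> *; lra.
Qed.
End RS.

Unset Implicit Arguments.
Theorem lemmal (C : numClosedFieldType) (S : Type) (mul : S -> S -> S)
  (delta : C) (theta : S -> 'M[C]_2) :
  is_semilattice mul ->
  0 <= delta -> delta < 3%:R / 100%:R ->
  (forall e f : S, hs_norm (theta e *m theta f - theta (mul e f)) <= delta) ->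
  (forall e f : S, in_Sk theta 2 f -> mul e f = f -> in_Sk theta 2 e) /\
  (forall x y : S, in_Sk theta 1 x -> in_Sk theta 1 y ->
     in_Sk theta 1 (mul x y) \/ in_Sk theta 0 (mul x y)).
Proof.
move=> [mA [mC mI]] d0 d3 H.
pose d : RS C := Sub delta (ger0_real d0).
have dd0 : 0 <= d by rewrite RSleE.
have dd3 : d < 3%:R / 100%:R by rewrite RSltE val_divn.
have hsq z : hs_norm (theta z *m theta z - theta z) <= val d.
  by have := H z z; rewrite mI.
have inS k z : in_Sk theta k z <-> nr (\tr (theta z) - k%:R) < 95%:R / 100%:R.
  by rewrite /in_Sk RSltE val_divn.
have P1 : forall e f : S, in_Sk theta 2 f -> mul e f = f -> in_Sk theta 2 e.
  move=> e f; rewrite !inS => hf hef.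
  apply: (part1 dd0 dd3 (hsq f) _ hf).
  by have := H e f; rewrite hef.
split => // x y hx hy.
have [h0|h1|h2] := S012 dd0 dd3 (hsq (mul x y)).
- by right; apply/inS.
- by left; apply/inS.
- exfalso.
  have hx2 : in_Sk theta 2 x.
    apply: (P1 x (mul x y)); first by apply/inS.
    by rewrite mA mI.
  move/inS: hx => hx; move/inS: hx2 => hx2.
  exact: (notS12 dd0 dd3 (hsq x) hx hx2).
Qed.
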